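(* Let $X_0^*$ be a $\{1,2,\dots\}$-valued random variable with $\mathbf P(X_0^*\ge2)>0$ and $\mathbf E(X_0^*m^{X_0^*})<\infty$, let $p>p_c$, let $X_0$ have law $(1-p)\delta_0+pP_{X_0^*}$, and let $n\ge0$. Then: (i) $\Theta_n(s)\in[0,1+\delta_n]$ for all $s\in[0,m)$; (ii) if $\delta_n\le1$, then for all $s\in[\frac m2,m)$, $$\Theta_{n+1}(s)\ge\frac ms\,\Theta_n(s)\,H_n(s)^{m-1}-\frac{\kappa(m-s)}{s}\,[\delta_n-\varphi_n(s)]^2H_n(s)^{m-2},$$ where $\kappa:=3^{m-2}+1$.
   Context: Fix an integer $m\ge2$. Recursive system: $X_{n+1}$ has the law of $(X_{n,1}+\cdots+X_{n,m}-1)^+$, with $X_{n,i}$ independent copies of $X_n$. $p_c:=\frac{1}{1+\mathbf E\{[(m-1)X_0^*-1]m^{X_0^*}\}}$. $H_n(s):=\mathbf E(s^{X_n})$; $\delta_n:=(m-1)\mathbf E(X_nm^{X_n})-\mathbf E(m^{X_n})$; $\varphi_n(s):=(m-1)sH_n'(s)-H_n(s)$; and $$\Theta_n(s):=[H_n(s)-s(s-1)H_n'(s)]-\frac{(m-1)(m-s)}{m}[2sH_n'(s)+s^2H_n''(s)]+\delta_n .$$ *)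

(* Defs.v *)
From Stdlib Require Import Reals Lra ClassicalEpsilon.
Open Scope R_scope.

(* A law on {0,1,2,...} is represented by its mass function q : nat -> R. *)

Definition conv (a b : nat -> R) (k : nat) : R :=
  sum_f_R0 (fun i => a i * b (k - i)%nat) k.

Definition delta0 (k : nat) : R := match k with O => 1 | _ => 0 end.

Fixpoint convpow (j : nat) (a : nat -> R) : nat -> R :=
  match j with O => delta0 | S j' => conv a (convpow j' a) end.

(* Law of (X_1 + ... + X_m - 1)^+ with X_i iid of law q. *)
Definition step (m : nat) (q : nat -> R) : nat -> R :=
  fun k => match k with
           | O => convpow m q 0%nat + convpow m q 1%nat
           | S k' => convpow m q (S (S k'))
           end.

Fixpoint law (m : nat) (q0 : nat -> R) (n : nat) : nat -> R :=
  match n with O => q0 | S n' => step m (law m q0 n') end.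

Definition Rsum (a : nat -> R) : R := epsilon (inhabits 0) (fun l => infinite_sum a l).

Definition expect (q : nat -> R) (f : nat -> R) : R := Rsum (fun k => q k * f k).

(* Generating function H(s) = E s^X and its first two derivatives
   (termwise: H'(s) = E[X s^(X-1)], H''(s) = E[X(X-1) s^(X-2)]). *)
Definition Hgf (q : nat -> R) (s : R) : R := expect q (fun k => s ^ k).
Definition Hgf1 (q : nat -> R) (s : R) : R := expect q (fun k => INR k * s ^ (k - 1)).
Definition Hgf2 (q : nat -> R) (s : R) : R :=
  expect q (fun k => INR k * INR (k - 1) * s ^ (k - 2)).

Definition deltaq (m : nat) (q : nat -> R) : R :=
  (INR m - 1) * expect q (fun k => INR k * INR m ^ k) - expect q (fun k => INR m ^ k).

Definition phiq (m : nat) (q : nat -> R) (s : R) : R :=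
  (INR m - 1) * s * Hgf1 q s - Hgf q s.

Definition Thetaq (m : nat) (q : nat -> R) (s : R) : R :=
  (Hgf q s - s * (s - 1) * Hgf1 q s)
  - (INR m - 1) * (INR m - s) / INR m * (2 * s * Hgf1 q s + s ^ 2 * Hgf2 q s)
  + deltaq m q.

Definition pc (m : nat) (r : nat -> R) : R :=
  1 / (1 + expect r (fun k => ((INR m - 1) * INR k - 1) * INR m ^ k)).

Definition X0law (p : R) (r : nat -> R) : nat -> R :=
  fun k => (1 - p) * delta0 k + p * r k.

(* Main.v *)
Require Import Defs.
From Stdlib Require Import Reals Lra Lia ClassicalEpsilon.
From Coquelicot Require Import Coquelicot.
Open Scope R_scope.

Lemma isR_plus (a b : nat -> R) (la lb : R) : is_series a la -> is_series b lb ->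
  is_series (fun n => a n + b n) (la + lb).
Proof. intros H1 H2. exact (is_series_plus a b la lb H1 H2). Qed.

Lemma isR_scal (c : R) (a : nat -> R) (l : R) : is_series a l -> is_series (fun n => c * a n) (c * l).
Proof. intros H. exact (@is_series_scal R_AbsRing R_NormedModule c a l H). Qed.

Lemma isR_ext (a b : nat -> R) (l : R) : (forall n, a n = b n) -> is_series a l -> is_series b l.
Proof. apply (@is_series_ext R_AbsRing R_NormedModule). Qed.

Lemma isR_val (a : nat -> R) (l l' : R) : l = l' -> is_series a l -> is_series a l'.
Proof. intros ->; auto. Qed.

Lemma isR_zero : is_series (fun _ => 0) 0.
Proof.
  assert (H : Rabs (1/2) < 1) by (rewrite Rabs_right; lra).
  pose proof (is_series_scal_r 0 _ _ (is_series_geom (1/2) H)) as H0.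
  rewrite Rmult_0_r in H0. eapply isR_ext; [|exact H0]. intro; simpl; ring.
Qed.

Lemma isR_single (u : nat -> R) : (forall k, u (S k) = 0) -> is_series u (u O).
Proof.
  intros Hu. apply is_series_decr_1.
  eapply isR_ext; [|eapply isR_val; [|exact isR_zero]].
  - intro n; simpl; now rewrite Hu.
  - unfold plus, opp; simpl. unfold zero; simpl. ring.
Qed.

Lemma isR_shift (u : nat -> R) (l : R) : is_series u l -> is_series (fun k => u (S k)) (l - u O).
Proof.
  intros H. apply is_series_incr_1. eapply isR_val; [|exact H].
  unfold plus; simpl. ring.
Qed.

Lemma isR_ge0 (a : nat -> R) (l : R) : (forall n, 0 <= a n) -> is_series a l -> 0 <= l.
Proof.
  intros Ha H.
  assert (E : Series a = l) by (apply is_series_unique; auto).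
  assert (E0 : Series (fun _ => 0) = 0) by (apply is_series_unique; apply isR_zero).
  rewrite <- E, <- E0. apply Series_le; [intro n; split; [lra|auto]|].
  eexists; eauto.
Qed.

Lemma isR_le (a b : nat -> R) (la lb : R) : (forall n, a n <= b n) -> is_series a la -> is_series b lb -> la <= lb.
Proof.
  intros Hab Ha Hb.
  assert (H : is_series (fun n => b n + (-1) * a n) (lb + (-1) * la))
    by (apply isR_plus; auto; apply isR_scal; auto).
  apply isR_ge0 in H; [lra|]. intro n; specialize (Hab n); lra.
Qed.

Lemma Rsum_eq (a : nat -> R) (l : R) : is_series a l -> Rsum a = l.
Proof.
  intros H. unfold Rsum. apply is_series_Reals in H.
  assert (Hs := epsilon_spec (inhabits 0) (fun l => infinite_sum a l) (ex_intro _ l H)).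
  simpl in Hs. eapply uniqueness_sum; eauto.
Qed.

Lemma ex_is (a : nat -> R) : ex_series a -> is_series a (Series a).
Proof. apply Series_correct. Qed.

Definition T0 (q : nat -> R) (s : R) (k : nat) := q k * s ^ k.
Definition T1 (q : nat -> R) (s : R) (k : nat) := q k * (INR k * s ^ k).
Definition T2 (q : nat -> R) (s : R) (k : nat) := q k * (INR k * INR k * s ^ k).

Lemma conv_nonneg a b : (forall k, 0 <= a k) -> (forall k, 0 <= b k) -> forall k, 0 <= conv a b k.
Proof.
  intros Ha Hb k. unfold conv. apply cond_pos_sum. intro; apply Rmult_le_pos; auto.
Qed.

Lemma conv_term (a b : nat -> R) (F : nat -> nat -> R) n :
  conv a b n * F n n = sum_f_R0 (fun i => a i * b (n - i)%nat * F i (n - i)%nat) n ->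
  True.
Proof. auto. Qed.

Lemma sum_split_n (f : nat -> R) (g : nat -> nat -> R) n :
  (forall i j, (i + j = n)%nat -> f n = g i j) ->
  forall (a b : nat -> R),
  conv a b n * f n = sum_f_R0 (fun i => a i * b (n - i)%nat * g i (n - i)%nat) n.
Proof.
  intros Hfg a b. unfold conv. rewrite Rmult_comm, scal_sum. apply sum_eq. intros i Hi.
  rewrite (Hfg i (n - i)%nat) by lia. ring.
Qed.

Lemma T0_nonneg q s : (forall k, 0 <= q k) -> 0 <= s -> forall k, 0 <= T0 q s k.
Proof. intros; unfold T0; apply Rmult_le_pos; auto; apply pow_le; auto. Qed.
Lemma T1_nonneg q s : (forall k, 0 <= q k) -> 0 <= s -> forall k, 0 <= T1 q s k.
Proof. intros; unfold T1; apply Rmult_le_pos; auto; apply Rmult_le_pos; [apply pos_INR|apply pow_le; auto]. Qed.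
Lemma T2_nonneg q s : (forall k, 0 <= q k) -> 0 <= s -> forall k, 0 <= T2 q s k.
Proof. intros; unfold T2; apply Rmult_le_pos; auto; apply Rmult_le_pos; [apply Rmult_le_pos; apply pos_INR|apply pow_le; auto]. Qed.

Section Conv.
Variables (a b : nat -> R) (s : R).
Hypotheses (Ha : forall k, 0 <= a k) (Hb : forall k, 0 <= b k) (Hs : 0 <= s).

Lemma conv0 A0 B0 : is_series (T0 a s) A0 -> is_series (T0 b s) B0 ->
  is_series (T0 (conv a b) s) (A0 * B0).
Proof.
  intros HA HB. pose proof (is_series_mult_pos _ _ _ _ HA HB (T0_nonneg a s Ha Hs) (T0_nonneg b s Hb Hs)) as H.
  eapply isR_ext; [|exact H]. intro n. change (T0 (conv a b) s n) with (conv a b n * s ^ n).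
  rewrite (sum_split_n (fun n => s ^ n) (fun i j => s ^ i * s ^ j)).
  - apply sum_eq; intros i Hi; unfold T0; ring.
  - intros i j <-. apply pow_add.
Qed.

Lemma conv1 A0 B0 A1 B1 : is_series (T0 a s) A0 -> is_series (T0 b s) B0 ->
  is_series (T1 a s) A1 -> is_series (T1 b s) B1 ->
  is_series (T1 (conv a b) s) (A1 * B0 + A0 * B1).
Proof.
  intros HA HB HA1 HB1.
  pose proof (is_series_mult_pos _ _ _ _ HA1 HB (T1_nonneg a s Ha Hs) (T0_nonneg b s Hb Hs)) as H1.
  pose proof (is_series_mult_pos _ _ _ _ HA HB1 (T0_nonneg a s Ha Hs) (T1_nonneg b s Hb Hs)) as H2.
  pose proof (isR_plus _ _ _ _ H1 H2) as H.
  eapply isR_ext; [|exact H]. intro n. cbv beta. rewrite <- plus_sum. change (T1 (conv a b) s n) with (conv a b n * (INR n * s ^ n)).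
  rewrite (sum_split_n (fun n => INR n * s ^ n) (fun i j => (INR i + INR j) * (s ^ i * s ^ j))).
  - apply sum_eq; intros i Hi; unfold T0, T1; ring.
  - intros i j <-. rewrite pow_add, plus_INR. ring.
Qed.

Lemma conv2 A0 B0 A1 B1 A2 B2 : is_series (T0 a s) A0 -> is_series (T0 b s) B0 ->
  is_series (T1 a s) A1 -> is_series (T1 b s) B1 ->
  is_series (T2 a s) A2 -> is_series (T2 b s) B2 ->
  is_series (T2 (conv a b) s) (A2 * B0 + 2 * (A1 * B1) + A0 * B2).
Proof.
  intros HA HB HA1 HB1 HA2 HB2.
  pose proof (is_series_mult_pos _ _ _ _ HA2 HB (T2_nonneg a s Ha Hs) (T0_nonneg b s Hb Hs)) as H1.
  pose proof (isR_scal 2 _ _ (is_series_mult_pos _ _ _ _ HA1 HB1 (T1_nonneg a s Ha Hs) (T1_nonneg b s Hb Hs))) as H2.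
  pose proof (is_series_mult_pos _ _ _ _ HA HB2 (T0_nonneg a s Ha Hs) (T2_nonneg b s Hb Hs)) as H3.
  pose proof (isR_plus _ _ _ _ (isR_plus _ _ _ _ H1 H2) H3) as H.
  eapply isR_ext; [|exact H]. intro n. cbv beta. rewrite scal_sum. rewrite <- !plus_sum. change (T2 (conv a b) s n) with (conv a b n * (INR n * INR n * s ^ n)).
  rewrite (sum_split_n (fun n => INR n * INR n * s ^ n) (fun i j => (INR i + INR j) * (INR i + INR j) * (s ^ i * s ^ j))).
  - apply sum_eq; intros i Hi; unfold T0, T1, T2; ring.
  - intros i j <-. rewrite pow_add, plus_INR. ring.
Qed.
End Conv.

Lemma convpow_nonneg q : (forall k, 0 <= q k) -> forall j k, 0 <= convpow j q k.
Proof.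
  intros Hq j. induction j as [|j IH]; intro k.
  - destruct k; simpl; lra.
  - simpl. apply conv_nonneg; auto.
Qed.

Lemma delta0_T0 s : is_series (T0 delta0 s) 1.
Proof. eapply isR_val; [|apply isR_single; intro; unfold T0; simpl; ring]. unfold T0; simpl; ring. Qed.
Lemma delta0_T1 s : is_series (T1 delta0 s) 0.
Proof. eapply isR_val; [|apply isR_single; intro; unfold T1; simpl; ring]. unfold T1; simpl; ring. Qed.
Lemma delta0_T2 s : is_series (T2 delta0 s) 0.
Proof. eapply isR_val; [|apply isR_single; intro; unfold T2; simpl; ring]. unfold T2; simpl; ring. Qed.

Section Pow.
Variables (q : nat -> R) (s h f1 : R).
Hypotheses (Hq : forall k, 0 <= q k) (Hs : 0 <= s)
  (H0 : is_series (T0 q s) h) (H1 : is_series (T1 q s) f1).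

Lemma convpow01 j : is_series (T0 (convpow j q) s) (h ^ j) /\
  is_series (T1 (convpow j q) s) (INR j * h ^ (j - 1) * f1).
Proof.
  induction j as [|j [IH0 IH1]].
  - split; simpl.
    + apply delta0_T0.
    + eapply isR_val; [|apply delta0_T1]. ring.
  - split; simpl convpow.
    + apply conv0; auto. apply convpow_nonneg; auto.
    + eapply isR_val; [|apply conv1; eauto; apply convpow_nonneg; auto].
      destruct j as [|j]; simpl; rewrite ?Nat.sub_0_r, ?S_INR; simpl; ring.
Qed.

Lemma convpow2 f2 : is_series (T2 q s) f2 -> forall j,
  is_series (T2 (convpow j q) s)
    (INR j * h ^ (j - 1) * f2 + INR j * (INR j - 1) * h ^ (j - 2) * f1 ^ 2).
Proof.
  intros H2 j. induction j as [|j IH].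
  - simpl. eapply isR_val; [|apply delta0_T2]. ring.
  - simpl convpow. destruct (convpow01 j) as [IH0 IH1].
    eapply isR_val; [|apply conv2; eauto; apply convpow_nonneg; auto].
    destruct j as [|[|j]]; simpl; rewrite ?Nat.sub_0_r, ?S_INR; simpl; ring.
Qed.
End Pow.

Section Step.
Variables (m : nat) (q : nat -> R) (s K0 K1 K2 : R).
Let P := convpow m q.
Hypotheses (Hs : 0 < s) (H0 : is_series (T0 P s) K0) (H1 : is_series (T1 P s) K1)
  (H2 : is_series (T2 P s) K2).

Lemma step0 : is_series (T0 (step m q) s) ((K0 - P O + s * P O) / s).
Proof.
  assert (E := isR_plus _ _ _ _ (isR_shift _ _ H0)
     (isR_single (fun k => match k with O => s * P O | _ => 0 end) (fun _ => eq_refl))).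
  apply (isR_scal (/ s)) in E. cbv beta in E.
  eapply isR_val; [|eapply isR_ext; [|exact E]].
  - unfold T0; simpl; field; lra.
  - intro k; unfold T0, step; destruct k; fold P; simpl; field; lra.
Qed.

Lemma step1 : is_series (T1 (step m q) s) ((K1 - K0 + P O) / s).
Proof.
  assert (E := isR_plus _ _ _ _ (isR_shift _ _ H1) (isR_scal (-1) _ _ (isR_shift _ _ H0))).
  apply (isR_scal (/ s)) in E. cbv beta in E.
  eapply isR_val; [|eapply isR_ext; [|exact E]].
  - unfold T0, T1; simpl; field; lra.
  - intro k; unfold T0, T1, step; destruct k; fold P; simpl; rewrite ?S_INR; simpl; field; lra.
Qed.

Lemma step2 : is_series (T2 (step m q) s) ((K2 - 2 * K1 + K0 - P O) / s).
Proof.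
  assert (E := isR_plus _ _ _ _ (isR_plus _ _ _ _ (isR_shift _ _ H2) (isR_scal (-2) _ _ (isR_shift _ _ H1)))
                 (isR_shift _ _ H0)).
  apply (isR_scal (/ s)) in E. cbv beta in E.
  eapply isR_val; [|eapply isR_ext; [|exact E]].
  - unfold T0, T1, T2; simpl; field; lra.
  - intro k; unfold T0, T1, T2, step; destruct k; fold P; simpl; rewrite ?S_INR; simpl; field; lra.
Qed.
End Step.

Lemma bern M s j : 0 <= s <= M -> INR j * s ^ (j - 1) * (M - s) <= M ^ j - s ^ j.
Proof.
  intros Hs. induction j as [|j IH].
  - simpl; lra.
  - assert (Hsj : s ^ j <= M ^ j) by (apply pow_incr; lra).
    assert (Hp : 0 <= s ^ j) by (apply pow_le; lra).
    destruct j as [|j].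
    + simpl; lra.
    + change (INR (S (S j)) * s ^ S j * (M - s) <= M * M ^ S j - s * s ^ S j).
      replace (S (S j) - 1)%nat with (S j) in IH by (simpl; lia).
      replace (S j - 1)%nat with j in IH by lia.
      rewrite S_INR. simpl pow in *.
      set (c := INR (S j)) in *.
      assert (0 <= c) by apply pos_INR.
      assert (E1 : s * (c * s ^ j * (M - s)) <= s * (M * M ^ j - s * s ^ j))
        by (apply Rmult_le_compat_l; lra).
      assert (Hmj : s * s ^ j <= M * M ^ j).
      { assert (0 <= M ^ j) by (apply pow_le; lra). nra. }
      assert (E2 : 0 <= (M - s) * (M * M ^ j - s * s ^ j)) by (apply Rmult_le_pos; lra).
      nra.
Qed.

Lemma bern2 M s k : 0 <= s <= M -> INR k * s ^ k * (M - s) <= s * M ^ k.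
Proof.
  intros Hs. destruct k as [|k].
  - simpl; lra.
  - pose proof (bern M s (S k) Hs) as H. replace (S k - 1)%nat with k in H by lia.
    simpl pow in *.
    assert (Hp : 0 <= s ^ k) by (apply pow_le; lra).
    assert (0 <= s * s * s ^ k) by (apply Rmult_le_pos; nra).
    assert (s * (INR (S k) * s ^ k * (M - s)) <= s * (M * M ^ k - s * s ^ k))
      by (apply Rmult_le_compat_l; lra).
    nra.
Qed.

Lemma hg1_bound M s k : 1 <= M -> 0 <= s <= M -> INR k * s ^ (k - 1) <= INR k * M ^ k.
Proof.
  intros HM Hs. apply Rmult_le_compat_l; [apply pos_INR|].
  destruct k as [|k]; simpl; [lra|]. rewrite Nat.sub_0_r.
  assert (s ^ k <= M ^ k) by (apply pow_incr; lra).
  assert (0 <= M ^ k) by (apply pow_le; lra). nra.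
Qed.

Lemma hg2_bound M s k : 1 <= M -> 0 <= s <= M ->
  INR k * INR (k - 1) * s ^ (k - 2) * (M - s) <= INR k * M ^ k.
Proof.
  intros HM Hs. pose proof (bern M s (k - 1) Hs) as H.
  assert (Hk : 0 <= INR k) by apply pos_INR.
  assert (0 <= s ^ (k - 1)) by (apply pow_le; lra).
  assert (M ^ (k - 1) <= M ^ k).
  { destruct k as [|k]; simpl; [lra|]. rewrite Nat.sub_0_r.
    assert (0 <= M ^ k) by (apply pow_le; lra). nra. }
  replace (k - 2)%nat with (k - 1 - 1)%nat by lia.
  rewrite Rmult_assoc, Rmult_assoc. apply Rmult_le_compat_l; auto.
  rewrite <- Rmult_assoc. lra.
Qed.

Lemma norm1 s k : 0 < s -> INR k * s ^ (k - 1) = / s * (INR k * s ^ k).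
Proof. intros Hs. destruct k; cbn [Nat.sub pow]; rewrite ?Nat.sub_0_r, ?S_INR; simpl INR; field; lra. Qed.

Lemma norm2 s k : 0 < s -> INR k * INR (k - 1) * s ^ (k - 2) = / (s * s) * (INR k * INR k * s ^ k - INR k * s ^ k).
Proof.
  intros Hs. destruct k as [|[|k]]; cbn [Nat.sub pow]; rewrite ?Nat.sub_0_r, ?S_INR; simpl INR; field; lra.
Qed.

Lemma norm1' s k : s * (INR k * s ^ (k - 1)) = INR k * s ^ k.
Proof. destruct k; cbn [Nat.sub pow]; rewrite ?Nat.sub_0_r, ?S_INR; simpl INR; ring. Qed.

Lemma norm2' s k : s ^ 2 * (INR k * INR (k - 1) * s ^ (k - 2)) = INR k * (INR k - 1) * s ^ k.
Proof.
  destruct k as [|[|k]]; cbn [Nat.sub pow]; rewrite ?Nat.sub_0_r, ?S_INR; simpl INR; ring.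
Qed.

Lemma powconv a h n : 0 <= h <= a -> INR (S n) * h ^ n * (a - h) <= a ^ S n - h ^ S n.
Proof.
  intros Hh. induction n as [|n IH].
  - simpl; lra.
  - rewrite (S_INR (S n)). simpl pow in *.
    set (c := INR (S n)) in *.
    assert (0 <= c) by apply pos_INR.
    assert (0 <= h ^ n) by (apply pow_le; lra).
    assert (E1 : h * (c * h ^ n * (a - h)) <= h * (a * a ^ n - h * h ^ n))
      by (apply Rmult_le_compat_l; lra).
    assert (Hmj : h * h ^ n <= a * a ^ n).
    { assert (h ^ n <= a ^ n) by (apply pow_incr; lra). nra. }
    assert (E2 : 0 <= (a - h) * (a * a ^ n - h * h ^ n)) by (apply Rmult_le_pos; lra).
    nra.
Qed.

Definition thk (M s : R) (k : nat) : R :=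
  s ^ k - s * (s - 1) * (INR k * s ^ (k - 1))
  - (M - 1) * (M - s) / M * (2 * s * (INR k * s ^ (k - 1)) + s ^ 2 * (INR k * INR (k - 1) * s ^ (k - 2)))
  + ((M - 1) * (INR k * M ^ k) - M ^ k).

Lemma thk_bounds M s k : 2 <= M -> 0 <= s <= M ->
  0 <= thk M s k /\ thk M s k - ((M - 1) * INR k - 1) * M ^ k <= 1.
Proof.
  intros HM Hs.
  assert (E : thk M s k = ((M - 1) * INR k - 1) * ((M * M ^ k - s * s ^ k - (INR k + 1) * s ^ k * (M - s)) / M)
     - (s - 1) * (s * (INR k * s ^ (k - 1)) - INR k * s ^ k)
     - (M - 1) * (M - s) / M * (2 * (s * (INR k * s ^ (k - 1)) - INR k * s ^ k)
          + (s ^ 2 * (INR k * INR (k - 1) * s ^ (k - 2)) - INR k * (INR k - 1) * s ^ k))).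
  { unfold thk. field. lra. }
  rewrite norm1', norm2' in E.
  assert (E' : thk M s k = ((M - 1) * INR k - 1) * ((M * M ^ k - s * s ^ k - (INR k + 1) * s ^ k * (M - s)) / M))
    by (rewrite E; ring).
  clear E. rewrite E'.
  destruct k as [|k].
  - assert (Z : ((M - 1) * INR 0 - 1) * ((M * M ^ 0 - s * s ^ 0 - (INR 0 + 1) * s ^ 0 * (M - s)) / M) = 0)
      by (simpl; field; lra).
    rewrite Z. simpl. lra.
  - pose proof (bern M s (S (S k)) Hs) as B. replace (S (S k) - 1)%nat with (S k) in B by lia.
    rewrite !S_INR in *. simpl pow in *.
    assert (0 <= INR k) by apply pos_INR.
    assert (0 <= (M - 1) * INR k) by (apply Rmult_le_pos; lra).
    assert (Hf : 0 <= (M - 1) * (INR k + 1) - 1) by lra.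
    assert (0 <= s ^ k) by (apply pow_le; lra).
    split.
    + apply Rmult_le_pos; auto. apply Rmult_le_pos; [lra|]. left; apply Rinv_0_lt_compat; lra.
    + assert (Hb : (M * (M * M ^ k) - s * (s * s ^ k) - (INR k + 1 + 1) * (s * s ^ k) * (M - s)) / M
                   - M * M ^ k <= 0).
      { apply Rmult_le_reg_l with M; [lra|]. field_simplify; [|lra].
        assert (0 <= s ^ k * s * (M - s)) by (apply Rmult_le_pos; [apply Rmult_le_pos|]; lra).
        assert (0 <= s ^ k * M) by (apply Rmult_le_pos; lra).
        nra. }
      assert (((M - 1) * (INR k + 1) - 1) * ((M * (M * M ^ k) - s * (s * s ^ k) - (INR k + 1 + 1) * (s * s ^ k) * (M - s)) / M - M * M ^ k) <= 0).
      { rewrite <- (Rmult_0_r ((M - 1) * (INR k + 1) - 1)). apply Rmult_le_compat_l; auto. }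
      apply Rle_trans with 0; [|lra]. rewrite <- Rmult_minus_distr_l. exact H2.
Qed.

Lemma ex_le (a b : nat -> R) : (forall n, 0 <= a n <= b n) -> ex_series b -> ex_series a.
Proof.
  intros H Hb. apply (ex_series_le a b); auto.
  intro n. change (norm (a n)) with (Rabs (a n)). rewrite Rabs_pos_eq; apply H.
Qed.

Lemma ex_scal (c : R) (b : nat -> R) : ex_series b -> ex_series (fun n => c * b n).
Proof. intros [l H]. exists (c * l). apply isR_scal; auto. Qed.

Definition Good (M : R) (q : nat -> R) :=
  (forall k, 0 <= q k) /\ is_series q 1 /\ ex_series (T0 q M) /\ ex_series (T1 q M).

Section GoodS.
Variables (M : R) (q : nat -> R) (s : R).
Hypotheses (HM : 2 <= M) (Hg : Good M q).

Lemma good_T0 : 0 <= s <= M -> ex_series (T0 q s).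
Proof.
  intros Hs. destruct Hg as (Hq & _ & H0 & _). apply (ex_le _ (T0 q M)); auto.
  intro n. split; [apply T0_nonneg; auto; lra|]. unfold T0.
  apply Rmult_le_compat_l; auto. apply pow_incr; lra.
Qed.

Lemma good_T1 : 0 <= s <= M -> ex_series (T1 q s).
Proof.
  intros Hs. destruct Hg as (Hq & _ & _ & H1). apply (ex_le _ (T1 q M)); auto.
  intro n. split; [apply T1_nonneg; auto; lra|]. unfold T1.
  apply Rmult_le_compat_l; auto. apply Rmult_le_compat_l; [apply pos_INR|]. apply pow_incr; lra.
Qed.

Lemma good_T2 : 0 <= s < M -> ex_series (T2 q s).
Proof.
  intros Hs. destruct Hg as (Hq & _ & _ & H1).
  apply (ex_le _ (fun n => (s / (M - s)) * T1 q M n)); [|apply ex_scal; auto].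
  intro n. split; [apply T2_nonneg; auto; lra|]. unfold T1, T2.
  pose proof (bern2 M s n (conj (proj1 Hs) (Rlt_le _ _ (proj2 Hs)))) as B.
  assert (0 <= q n * INR n) by (apply Rmult_le_pos; auto; apply pos_INR).
  assert (B' : INR n * s ^ n <= s / (M - s) * M ^ n).
  { apply Rmult_le_reg_r with (M - s); [lra|]. unfold Rdiv.
    replace (s * / (M - s) * M ^ n * (M - s)) with (s * M ^ n) by (field; lra). lra. }
  apply Rmult_le_compat_l with (r := q n * INR n) in B'; auto.
  replace (q n * (INR n * INR n * s ^ n)) with (q n * INR n * (INR n * s ^ n)) by ring.
  replace (s / (M - s) * (q n * (INR n * M ^ n))) with (q n * INR n * (s / (M - s) * M ^ n)) by ring.
  auto.
Qed.

Lemma good_H1 : 0 <= s <= M -> ex_series (fun k => q k * (INR k * s ^ (k - 1))).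
Proof.
  intros Hs. destruct Hg as (Hq & _ & _ & H1). apply (ex_le _ (T1 q M)); auto.
  intro n. split.
  - apply Rmult_le_pos; auto; apply Rmult_le_pos; [apply pos_INR|apply pow_le; lra].
  - unfold T1. apply Rmult_le_compat_l; auto. apply hg1_bound; lra.
Qed.

Lemma good_H2 : 0 <= s < M -> ex_series (fun k => q k * (INR k * INR (k - 1) * s ^ (k - 2))).
Proof.
  intros Hs. destruct Hg as (Hq & _ & _ & H1).
  apply (ex_le _ (fun n => / (M - s) * T1 q M n)); [|apply ex_scal; auto].
  intro n. split.
  - apply Rmult_le_pos; auto; apply Rmult_le_pos; [apply Rmult_le_pos; apply pos_INR|apply pow_le; lra].
  - unfold T1. pose proof (hg2_bound M s n ltac:(lra) ltac:(lra)) as B.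
    assert (B' : INR n * INR (n - 1) * s ^ (n - 2) <= / (M - s) * (INR n * M ^ n)).
    { apply Rmult_le_reg_r with (M - s); [lra|].
      replace (/ (M - s) * (INR n * M ^ n) * (M - s)) with (INR n * M ^ n) by (field; lra). lra. }
    apply Rmult_le_compat_l with (r := q n) in B'; auto.
    replace (/ (M - s) * (q n * (INR n * M ^ n))) with (q n * (/ (M - s) * (INR n * M ^ n))) by ring.
    auto.
Qed.
End GoodS.

Lemma Hgf_eq q s l : is_series (T0 q s) l -> Hgf q s = l.
Proof. intros H; unfold Hgf, expect; apply Rsum_eq; exact H. Qed.
Lemma Hgf1_eq q s l : is_series (fun k => q k * (INR k * s ^ (k - 1))) l -> Hgf1 q s = l.
Proof. intros H; unfold Hgf1, expect; apply Rsum_eq; exact H. Qed.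
Lemma Hgf2_eq q s l : is_series (fun k => q k * (INR k * INR (k - 1) * s ^ (k - 2))) l -> Hgf2 q s = l.
Proof. intros H; unfold Hgf2, expect; apply Rsum_eq; exact H. Qed.
Lemma deltaq_eq m q A B : is_series (T0 q (INR m)) A -> is_series (T1 q (INR m)) B ->
  deltaq m q = (INR m - 1) * B - A.
Proof.
  intros HA HB; unfold deltaq, expect.
  rewrite (Rsum_eq (fun k => q k * INR m ^ k) A HA), (Rsum_eq (fun k => q k * (INR k * INR m ^ k)) B HB).
  reflexivity.
Qed.

Lemma part_i m q s : 2 <= INR m -> Good (INR m) q -> 0 <= s < INR m ->
  0 <= Thetaq m q s <= 1 + deltaq m q.
Proof.
  intros HM Hg Hs. set (M := INR m) in *.
  assert (HT0 : ex_series (T0 q s)) by (eapply good_T0; eauto; lra).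
  assert (HH1 : ex_series (fun k => q k * (INR k * s ^ (k - 1)))) by (eapply good_H1; eauto; lra).
  assert (HH2 : ex_series (fun k => q k * (INR k * INR (k - 1) * s ^ (k - 2)))) by (eapply good_H2; eauto; lra).
  apply ex_is in HT0. apply ex_is in HH1. apply ex_is in HH2.
  pose proof Hg as (Hq & Hsum & HA & HB).
  apply ex_is in HA. apply ex_is in HB.
  unfold Thetaq. rewrite (Hgf_eq _ _ _ HT0), (Hgf1_eq _ _ _ HH1), (Hgf2_eq _ _ _ HH2),
    (deltaq_eq _ _ _ _ HA HB). fold M.
  set (c := (M - 1) * (M - s) / M).
  set (H0 := Series (T0 q s)) in *. set (H1 := Series (fun k => q k * (INR k * s ^ (k - 1)))) in *.
  set (H2 := Series (fun k => q k * (INR k * INR (k - 1) * s ^ (k - 2)))) in *.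
  set (A := Series (T0 q M)) in *. set (B := Series (T1 q M)) in *.
  assert (HT : is_series (fun k => q k * thk M s k)
     (H0 - s * (s - 1) * H1 - c * (2 * s * H1 + s ^ 2 * H2) + ((M - 1) * B - A))).
  { assert (E := isR_plus _ _ _ _ (isR_plus _ _ _ _ (isR_plus _ _ _ _ (isR_plus _ _ _ _ (isR_plus _ _ _ _ HT0
        (isR_scal (- (s * (s - 1)) - c * 2 * s) _ _ HH1)) (isR_scal (- c * s ^ 2) _ _ HH2))
        (isR_scal (M - 1) _ _ HB)) (isR_scal (-1) _ _ HA)) isR_zero).
    eapply isR_val; [|eapply isR_ext; [|exact E]].
    - ring.
    - intro k. unfold thk, T0, T1. fold M. fold c. ring. }
  split.
  - apply (isR_ge0 _ _ (fun k => Rmult_le_pos _ _ (Hq k) (proj1 (thk_bounds M s k HM ltac:(lra)))) HT).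
  - assert (E := isR_plus _ _ _ _ (isR_plus _ _ _ _ (isR_plus _ _ _ _ Hsum (isR_scal (M - 1) _ _ HB))
        (isR_scal (-1) _ _ HA)) (isR_scal (-1) _ _ HT)).
    cbv beta in E.
    apply isR_ge0 in E; [lra|].
    intro k. destruct (thk_bounds M s k HM ltac:(lra)) as [_ Hu].
    unfold T0, T1.
    replace (q k + (M - 1) * (q k * (INR k * M ^ k)) + -1 * (q k * M ^ k) + -1 * (q k * thk M s k))
      with (q k * (1 - (thk M s k - ((M - 1) * INR k - 1) * M ^ k))) by ring.
    apply Rmult_le_pos; auto. lra.
Qed.

Lemma alg (M s h f1 f2 A B P0 hm hm1 x Am Am1 K : R) :
  2 <= M -> 0 < s < M -> 0 <= h -> 0 <= f1 -> 0 <= x -> h <= A ->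
  hm = h * hm1 -> hm1 = h * x -> Am = A * Am1 ->
  (M - s) * f1 <= s * (A - h) ->
  (M - 1) * x * (A - h) <= Am1 - hm1 ->
  (M - 1) * f1 - h <= (M - 1) * B - A ->
  0 <= (M - 1) * B - A -> 1 <= K ->
  let c := (M - 1) * (M - s) / M in
  let Th0 := h - s * (s - 1) * (/ s * f1)
             - c * (2 * s * (/ s * f1) + s ^ 2 * (/ (s * s) * (f2 - f1))) + ((M - 1) * B - A) in
  let K0 := hm in
  let K1 := M * hm1 * f1 in
  let K2 := M * hm1 * f2 + M * (M - 1) * x * f1 ^ 2 in
  let g0 := (K0 - P0 + s * P0) / s in
  let g1 := (K1 - K0 + P0) / s in
  let g2 := (K2 - 2 * K1 + K0 - P0) / s in
  let gA := (Am - P0 + M * P0) / M in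
  let gB := (M * Am1 * B - Am + P0) / M in
  let Th1 := g0 - s * (s - 1) * (/ s * g1)
             - c * (2 * s * (/ s * g1) + s ^ 2 * (/ (s * s) * (g2 - g1))) + ((M - 1) * gB - gA) in
  Th1 >= M / s * Th0 * hm1
         - K * (M - s) / s * (((M - 1) * B - A) - ((M - 1) * s * (/ s * f1) - h)) ^ 2 * x.
Proof.
  intros HM Hs Hh Hf1 Hx HhA Ehm Ehm1 EAm Hcv Hpc Hphi Hd HK c Th0 K0 K1 K2 g0 g1 g2 gA gB Th1.
  set (d := (M - 1) * B - A) in *.
  set (phi := (M - 1) * f1 - h) in *.
  assert (Ephi : (M - 1) * s * (/ s * f1) - h = phi) by (unfold phi; field; lra).
  rewrite Ephi.
  assert (Key : Th1 - (M / s * Th0 * hm1 - K * (M - s) / s * (d - phi) ^ 2 * x)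
     = / s * (- (M - s) * x * phi ^ 2 + d * (s * Am1 - M * hm1) + K * (M - s) * (d - phi) ^ 2 * x)).
  { unfold Th1, Th0, g0, g1, g2, gA, gB, K0, K1, K2, c, d, phi.
    subst hm Am hm1. field. lra. }
  assert (S1 : s * ((M - 1) * x * (A - h)) <= s * (Am1 - hm1)) by (apply Rmult_le_compat_l; lra).
  assert (S2 : (M - 1) * x * ((M - s) * f1) <= (M - 1) * x * (s * (A - h))).
  { apply Rmult_le_compat_l; auto. apply Rmult_le_pos; lra. }
  assert (S3 : d * ((M - 1) * x * ((M - s) * f1) - (M - s) * hm1) <= d * (s * (Am1 - hm1) - (M - s) * hm1)).
  { apply Rmult_le_compat_l; auto. lra. }
  assert (S4 : 0 <= (M - s) * x * (d - phi) * (d + (K - 1) * (d - phi))).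
  { apply Rmult_le_pos; [apply Rmult_le_pos; [apply Rmult_le_pos|]|]; try lra.
    assert (0 <= (K - 1) * (d - phi)) by (apply Rmult_le_pos; lra). lra. }
  assert (Br : 0 <= - (M - s) * x * phi ^ 2 + d * (s * Am1 - M * hm1) + K * (M - s) * (d - phi) ^ 2 * x).
  { assert (E1 : d * ((M - 1) * x * ((M - s) * f1) - (M - s) * hm1) = d * (M - s) * x * phi)
      by (unfold phi; rewrite Ehm1; ring).
    assert (E2 : - (M - s) * x * phi ^ 2 + d * (M - s) * x * phi + K * (M - s) * (d - phi) ^ 2 * x
                 = (M - s) * x * (d - phi) * (d + (K - 1) * (d - phi))) by ring.
    assert (E3 : d * (s * Am1 - M * hm1) = d * (s * (Am1 - hm1) - (M - s) * hm1)) by ring.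
    lra. }
  assert (0 <= / s * (- (M - s) * x * phi ^ 2 + d * (s * Am1 - M * hm1) + K * (M - s) * (d - phi) ^ 2 * x)).
  { apply Rmult_le_pos; auto. left; apply Rinv_0_lt_compat; lra. }
  lra.
Qed.

Section StepGood.
Variables (m : nat) (q : nat -> R).
Let M := INR m.
Hypotheses (Hm : 2 <= M) (Hg : Good M q).

Lemma stepvals01 s : 0 < s <= M ->
  is_series (T0 (step m q) s) ((Series (T0 q s) ^ m - convpow m q O + s * convpow m q O) / s) /\
  is_series (T1 (step m q) s) ((INR m * Series (T0 q s) ^ (m - 1) * Series (T1 q s)
                                - Series (T0 q s) ^ m + convpow m q O) / s).
Proof.
  intros Hs. pose proof Hg as (Hq & _ & _ & _).
  assert (H0 : ex_series (T0 q s)) by (eapply good_T0; eauto; lra).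
  assert (H1 : ex_series (T1 q s)) by (eapply good_T1; eauto; lra).
  apply ex_is in H0. apply ex_is in H1.
  destruct (convpow01 q s _ _ Hq ltac:(lra) H0 H1 m) as [P0 P1].
  split.
  - apply step0; auto; lra.
  - apply step1; auto; lra.
Qed.

Lemma stepvals2 s : 0 < s < M ->
  is_series (T2 (step m q) s)
   (((INR m * Series (T0 q s) ^ (m - 1) * Series (T2 q s)
      + INR m * (INR m - 1) * Series (T0 q s) ^ (m - 2) * Series (T1 q s) ^ 2)
     - 2 * (INR m * Series (T0 q s) ^ (m - 1) * Series (T1 q s))
     + Series (T0 q s) ^ m - convpow m q O) / s).
Proof.
  intros Hs. pose proof Hg as (Hq & _ & _ & _).
  assert (H0 : ex_series (T0 q s)) by (eapply good_T0; eauto; lra).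
  assert (H1 : ex_series (T1 q s)) by (eapply good_T1; eauto; lra).
  assert (H2 : ex_series (T2 q s)) by (eapply good_T2; eauto; lra).
  apply ex_is in H0. apply ex_is in H1. apply ex_is in H2.
  destruct (convpow01 q s _ _ Hq ltac:(lra) H0 H1 m) as [P0 P1].
  pose proof (convpow2 q s _ _ Hq ltac:(lra) H0 H1 _ H2 m) as P2.
  apply step2; auto; lra.
Qed.

Lemma step_good : Good M (step m q).
Proof.
  pose proof Hg as (Hq & Hs1 & _ & _).
  split; [|split; [|split]].
  - intro k. unfold step. destruct k.
    + apply Rplus_le_le_0_compat; apply convpow_nonneg; auto.
    + apply convpow_nonneg; auto.
  - destruct (stepvals01 1 ltac:(lra)) as [E _].
    assert (Hq1 : is_series (T0 q 1) 1).
    { eapply isR_ext; [|exact Hs1]. intro; unfold T0; rewrite pow1; ring. }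
    rewrite (is_series_unique _ _ Hq1), pow1 in E.
    eapply isR_val; [|eapply isR_ext; [|exact E]].
    + field.
    + intro; unfold T0; rewrite pow1; ring.
  - destruct (stepvals01 M ltac:(lra)) as [E _]. eexists; exact E.
  - destruct (stepvals01 M ltac:(lra)) as [_ E]. eexists; exact E.
Qed.

Lemma step_delta : deltaq m (step m q) = Series (T0 q M) ^ (m - 1) * deltaq m q.
Proof.
  pose proof Hg as (Hq & _ & HA & HB). apply ex_is in HA. apply ex_is in HB.
  destruct (stepvals01 M ltac:(lra)) as [E0 E1].
  rewrite (deltaq_eq _ _ _ _ E0 E1), (deltaq_eq _ _ _ _ HA HB). fold M.
  destruct m as [|[|k]]; [unfold M in Hm; simpl in Hm; lra|unfold M in Hm; simpl in Hm; lra|].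
  replace (S (S k) - 1)%nat with (S k) by lia. simpl pow.
  field. lra.
Qed.
End StepGood.

Lemma Hgf1_val q s (f1 : R) : 0 < s -> is_series (T1 q s) f1 -> Hgf1 q s = / s * f1.
Proof.
  intros Hs H. apply Hgf1_eq. eapply isR_ext; [|apply (isR_scal (/ s) _ _ H)].
  intro k. unfold T1. rewrite (norm1 s k Hs). ring.
Qed.

Lemma Hgf2_val q s (f1 f2 : R) : 0 < s -> is_series (T1 q s) f1 -> is_series (T2 q s) f2 ->
  Hgf2 q s = / (s * s) * (f2 - f1).
Proof.
  intros Hs H1 H2. apply Hgf2_eq. eapply isR_val; [|eapply isR_ext; [|apply (isR_scal (/ (s * s)) _ _ (isR_plus _ _ _ _ H2 (isR_scal (-1) _ _ H1)))]].
  ring. intro k. unfold T1, T2. rewrite (norm2 s k Hs). ring.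
Qed.

Lemma part_ii m q s : (2 <= m)%nat -> Good (INR m) q -> 0 <= deltaq m q -> INR m / 2 <= s < INR m ->
  Thetaq m (step m q) s >=
    INR m / s * Thetaq m q s * Hgf q s ^ (m - 1)
    - (3 ^ (m - 2) + 1) * (INR m - s) / s * (deltaq m q - phiq m q s) ^ 2 * Hgf q s ^ (m - 2).
Proof.
  intros Hm2 Hg Hd Hs.
  assert (HM : 2 <= INR m) by (replace 2 with (INR 2) by (simpl; ring); apply le_INR; auto).
  set (M := INR m) in *.
  assert (Hs0 : 0 < s) by lra.
  pose proof Hg as (Hq & _ & HA & HB). apply ex_is in HA. apply ex_is in HB.
  assert (H0 : ex_series (T0 q s)) by (eapply good_T0; eauto; lra).
  assert (H1 : ex_series (T1 q s)) by (eapply good_T1; eauto; lra).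
  assert (H2 : ex_series (T2 q s)) by (eapply good_T2; eauto; lra).
  apply ex_is in H0. apply ex_is in H1. apply ex_is in H2.
  assert (Hs1 : 0 < s <= M) by lra. assert (Hs2 : 0 < s < M) by lra.
  destruct (stepvals01 m q Hg s Hs1) as [G0 G1].
  pose proof (stepvals2 m q Hg s Hs2) as G2.
  assert (HMM : 0 < M <= M) by lra.
  destruct (stepvals01 m q Hg M HMM) as [GA GB].
  unfold Thetaq, phiq.
  rewrite (Hgf_eq _ _ _ G0), (Hgf1_val _ _ _ Hs0 G1), (Hgf2_val _ _ _ _ Hs0 G1 G2),
    (deltaq_eq _ _ _ _ GA GB), (Hgf_eq _ _ _ H0), (Hgf1_val _ _ _ Hs0 H1), (Hgf2_val _ _ _ _ Hs0 H1 H2).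
  rewrite (deltaq_eq _ _ _ _ HA HB) in *. fold M.
  set (h := Series (T0 q s)) in *. set (f1 := Series (T1 q s)) in *. set (f2 := Series (T2 q s)) in *.
  set (A := Series (T0 q M)) in *. set (B := Series (T1 q M)) in *.
  set (P0 := convpow m q O).
  assert (Hh : 0 <= h) by (apply (isR_ge0 _ _ (T0_nonneg q s Hq ltac:(lra)) H0)).
  assert (Hf1 : 0 <= f1) by (apply (isR_ge0 _ _ (T1_nonneg q s Hq ltac:(lra)) H1)).
  assert (HhA : h <= A).
  { apply (isR_le _ _ _ _ (fun k => Rmult_le_compat_l _ _ _ (Hq k) (pow_incr s M k ltac:(lra))) H0 HA). }
  assert (Hcv : (M - s) * f1 <= s * (A - h)).
  { assert (E1 := isR_scal (M - s) _ _ H1).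
    assert (E2 := isR_scal s _ _ (isR_plus _ _ _ _ HA (isR_scal (-1) _ _ H0))).
    enough (L : (M - s) * f1 <= s * (A + -1 * h)) by lra.
    eapply isR_le; [|exact E1|exact E2]. intro k. cbv beta.
    unfold T0, T1. pose proof (bern M s k ltac:(lra)) as Bk.
    rewrite <- (norm1' s k).
    replace (s * (q k * M ^ k + -1 * (q k * s ^ k))) with (q k * (s * (M ^ k - s ^ k))) by ring.
    replace ((M - s) * (q k * (s * (INR k * s ^ (k - 1))))) with (q k * (s * (INR k * s ^ (k - 1) * (M - s)))) by ring.
    apply Rmult_le_compat_l; auto. apply Rmult_le_compat_l; lra. }
  assert (Hphi : (M - 1) * f1 - h <= (M - 1) * B - A).
  { assert (E1 := isR_plus _ _ _ _ (isR_scal (M - 1) _ _ H1) (isR_scal (-1) _ _ H0)).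
    assert (E2 := isR_plus _ _ _ _ (isR_scal (M - 1) _ _ HB) (isR_scal (-1) _ _ HA)).
    enough (L : (M - 1) * f1 + -1 * h <= (M - 1) * B + -1 * A) by lra.
    eapply isR_le; [|exact E1|exact E2]. intro k. cbv beta.
    unfold T0, T1.
    replace ((M - 1) * (q k * (INR k * s ^ k)) + -1 * (q k * s ^ k)) with (q k * (((M - 1) * INR k - 1) * s ^ k)) by ring.
    replace ((M - 1) * (q k * (INR k * M ^ k)) + -1 * (q k * M ^ k)) with (q k * (((M - 1) * INR k - 1) * M ^ k)) by ring.
    apply Rmult_le_compat_l; auto.
    destruct k as [|k]; [simpl; lra|].
    apply Rmult_le_compat_l; [|apply pow_incr; lra].
    rewrite S_INR. assert (0 <= INR k) by apply pos_INR.
    assert (0 <= (M - 1) * INR k) by (apply Rmult_le_pos; lra). lra. }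
  destruct m as [|[|k]]; [simpl in Hm2; lia|simpl in Hm2; lia|].
  replace (S (S k) - 1)%nat with (S k) in * by lia.
  replace (S (S k) - 2)%nat with k in * by lia.
  pose proof (powconv A h k (conj Hh HhA)) as Hpc.
  assert (HM1 : INR (S k) = M - 1) by (unfold M; rewrite (S_INR (S k)); ring).
  rewrite HM1 in Hpc.
  assert (HK : 1 <= 3 ^ k + 1) by (assert (0 < 3 ^ k) by (apply pow_lt; lra); lra).
  pose proof (alg M s h f1 f2 A B P0 (h ^ S (S k)) (h ^ S k) (h ^ k) (A ^ S (S k)) (A ^ S k) (3 ^ k + 1)
     HM ltac:(lra) Hh Hf1 (pow_le h k Hh) HhA eq_refl eq_refl eq_refl Hcv Hpc Hphi Hd HK) as R.
  cbv zeta in R. exact R.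
Qed.

Lemma base m r p : (2 <= m)%nat ->
  (forall k, 0 <= r k) -> r 0%nat = 0 -> infinite_sum r 1 ->
  (exists l, infinite_sum (fun k => r k * (INR k * INR m ^ k)) l) ->
  pc m r < p -> p <= 1 ->
  Good (INR m) (X0law p r) /\ 0 <= deltaq m (X0law p r).
Proof.
  intros Hm2 Hr Hr0 Hrs [l Hl] Hpc Hp1.
  assert (HM : 2 <= INR m) by (replace 2 with (INR 2) by (simpl; ring); apply le_INR; auto).
  set (M := INR m) in *.
  apply is_series_Reals in Hrs. apply is_series_Reals in Hl.
  change (is_series (T1 r M) l) in Hl.
  assert (HA : ex_series (T0 r M)).
  { apply (ex_le _ (T1 r M)); [|eexists; eauto]. intro k. split; [apply T0_nonneg; auto; lra|].
    unfold T0, T1. destruct k as [|k]; [rewrite Hr0; lra|].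
    rewrite S_INR. assert (0 <= INR k) by apply pos_INR.
    assert (0 <= r (S k) * M ^ S k) by (apply Rmult_le_pos; auto; apply pow_le; lra).
    assert (0 <= INR k * (r (S k) * M ^ S k)) by (apply Rmult_le_pos; auto). nra. }
  apply ex_is in HA. set (Ar := Series (T0 r M)) in *.
  set (E := (M - 1) * l - Ar).
  assert (HE : is_series (fun k => r k * (((M - 1) * INR k - 1) * M ^ k)) E).
  { eapply isR_val; [|eapply isR_ext; [|exact (isR_plus _ _ _ _ (isR_scal (M - 1) _ _ Hl) (isR_scal (-1) _ _ HA))]].
    - unfold E; ring.
    - intro k; unfold T0, T1; cbv beta; ring. }
  assert (HE0 : 0 <= E).
  { refine (isR_ge0 _ _ _ HE). intro k. cbv beta.
    destruct k as [|k]; [rewrite Hr0; lra|].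
    apply Rmult_le_pos; auto.
    apply Rmult_le_pos; [|apply pow_le; lra].
    rewrite S_INR. assert (0 <= INR k) by apply pos_INR.
    assert (0 <= (M - 1) * INR k) by (apply Rmult_le_pos; lra). lra. }
  unfold pc, expect in Hpc. fold M in Hpc.
  rewrite (Rsum_eq (fun k => r k * (((M - 1) * INR k - 1) * M ^ k)) E HE) in Hpc.
  assert (Hpc0 : 0 < 1 / (1 + E)) by (unfold Rdiv; apply Rmult_lt_0_compat; [lra|apply Rinv_0_lt_compat; lra]).
  assert (Hp1E : 1 < p * (1 + E)).
  { apply (Rmult_lt_compat_r (1 + E)) in Hpc; [|lra].
    replace (1 / (1 + E) * (1 + E)) with 1 in Hpc by (field; lra). lra. }
  assert (Hd0 : forall k, 0 <= delta0 k) by (intro k; destruct k; simpl; lra).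
  assert (HX0 : is_series (T0 (X0law p r) M) ((1 - p) * 1 + p * Ar)).
  { eapply isR_ext; [|exact (isR_plus _ _ _ _ (isR_scal (1 - p) _ _ (delta0_T0 M)) (isR_scal p _ _ HA))].
    intro k; unfold T0, X0law; cbv beta; ring. }
  assert (HX1 : is_series (T1 (X0law p r) M) ((1 - p) * 0 + p * l)).
  { eapply isR_ext; [|exact (isR_plus _ _ _ _ (isR_scal (1 - p) _ _ (delta0_T1 M)) (isR_scal p _ _ Hl))].
    intro k; unfold T1, X0law; cbv beta; ring. }
  split; [split; [|split; [|split]]|].
  - intro k. unfold X0law. apply Rplus_le_le_0_compat; apply Rmult_le_pos; auto; lra.
  - assert (Hd := isR_single delta0 (fun _ => eq_refl)).
    eapply isR_val; [|eapply isR_ext; [|exact (isR_plus _ _ _ _ (isR_scal (1 - p) _ _ Hd) (isR_scal p _ _ Hrs))]].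
    + simpl; ring.
    + intro k; unfold X0law; cbv beta; ring.
  - eexists; exact HX0.
  - eexists; exact HX1.
  - rewrite (deltaq_eq _ _ _ _ HX0 HX1). fold M. unfold E in Hp1E. nra.
Qed.

Theorem lemma3p3 (m : nat) (r : nat -> R) (p : R) :
  (2 <= m)%nat ->
  (forall k, 0 <= r k) -> r 0%nat = 0 -> infinite_sum r 1 ->
  (exists k, (2 <= k)%nat /\ 0 < r k) ->
  (exists l, infinite_sum (fun k => r k * (INR k * INR m ^ k)) l) ->
  pc m r < p -> p <= 1 ->
  forall n : nat,
    (forall s, 0 <= s < INR m ->
       0 <= Thetaq m (law m (X0law p r) n) s <= 1 + deltaq m (law m (X0law p r) n))
    /\
    (deltaq m (law m (X0law p r) n) <= 1 ->
     forall s, INR m / 2 <= s < INR m ->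
       Thetaq m (law m (X0law p r) (S n)) s >=
         INR m / s * Thetaq m (law m (X0law p r) n) s
           * Hgf (law m (X0law p r) n) s ^ (m - 1)
         - (3 ^ (m - 2) + 1) * (INR m - s) / s
           * (deltaq m (law m (X0law p r) n) - phiq m (law m (X0law p r) n) s) ^ 2
           * Hgf (law m (X0law p r) n) s ^ (m - 2)).
Proof.
  intros Hm2 Hr Hr0 Hrs _ Hl Hpc Hp1.
  assert (HM : 2 <= INR m) by (replace 2 with (INR 2) by (simpl; ring); apply le_INR; auto).
  assert (Inv : forall n, Good (INR m) (law m (X0law p r) n) /\ 0 <= deltaq m (law m (X0law p r) n)).
  { induction n as [|n [IHg IHd]].
    - apply base; auto.
    - change (law m (X0law p r) (S n)) with (step m (law m (X0law p r) n)).
      split; [apply step_good; auto|].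
      rewrite step_delta; auto. apply Rmult_le_pos; auto. apply pow_le.
      pose proof IHg as (Hq & _ & HA & _). apply ex_is in HA.
      exact (isR_ge0 _ _ (T0_nonneg _ (INR m) Hq ltac:(lra)) HA). }
  intro n. destruct (Inv n) as [Hg Hd]. split.
  - intros s Hs. apply part_i; auto.
  - intros _ s Hs. change (law m (X0law p r) (S n)) with (step m (law m (X0law p r) n)).
    apply part_ii; auto.
Qed.
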